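(* On the open set $\Omega\subset\mathbb{R}^3$ where $u,v,w$ are pairwise distinct, consider the system $$u'=\frac{1}{u-w},\qquad v'=\frac{1}{v-w},\qquad w'=\frac1{w-u}+\frac1{w-v},$$ written $\mathbf{u}'=\mathbf{U}(\mathbf{u})$. Define $$P_{n1}(\mathbf{u})=\frac{2}{3(u-v)^2(v-w)(w-u)}\begin{pmatrix}0&1&-1\\-1&0&1\\1&-1&0\end{pmatrix},\qquad H_n(\mathbf{u})=\frac14(u+v-2w)(u-v)^3,$$ $$P_{n2}(\mathbf{u})=\frac16\frac{u-v}{(v-w)(w-u)}\begin{pmatrix}0&2&1\\-2&0&-1\\-1&1&0\end{pmatrix}+\frac12\Big[\frac1{w-u}-\frac1{v-w}\Big]\begin{pmatrix}0&0&-1\\0&0&-1\\1&1&0\end{pmatrix},$$ and $H^{(1)}(\mathbf{u})=u+v+w$. Then $P_{n1}$ and $P_{n2}$ are compatible Poisson matrices on $\Omega$ and $$\mathbf{u}'=P_{n1}(\mathbf{u})\nabla H_n(\mathbf{u})=P_{n2}(\mathbf{u})\nabla H^{(1)}(\mathbf{u}).$$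
   Context: A smooth skew-symmetric matrix-valued function $P$ on an open subset of $\mathbb{R}^3$ is a Poisson matrix if the bracket $\{f,g\}=(\nabla f)^{T}P\,\nabla g$ satisfies the Jacobi identity; two Poisson matrices are compatible if every linear combination of them is again a Poisson matrix. The system describes two bodies at $u,v$ that do not interact with each other but each interact with a third body at $w$. *)

(* Defs.v *)
From Stdlib Require Import Reals.
From Coquelicot Require Import Coquelicot.
Open Scope R_scope.

Inductive idx := i1 | i2 | i3.

Definition idx_eqb (i j : idx) : bool :=
  match i, j with
  | i1, i1 | i2, i2 | i3, i3 => true
  | _, _ => false
  end.

Definition pt := idx -> R.

Definition pu (x : pt) := x i1.
Definition pv (x : pt) := x i2.
Definition pw (x : pt) := x i3.

Definition upd (x : pt) (i : idx) (t : R) : pt :=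
  fun j => if idx_eqb i j then t else x j.

Definition partial (i : idx) (f : pt -> R) (x : pt) : R :=
  Derive (fun t => f (upd x i t)) (x i).

Definition has_partial (i : idx) (f : pt -> R) (x : pt) : Prop :=
  ex_derive (fun t => f (upd x i t)) (x i).

Definition cont_on (D : pt -> Prop) (f : pt -> R) : Prop :=
  forall x, D x -> forall eps, 0 < eps -> exists delta, 0 < delta /\
    forall y, (forall i, Rabs (y i - x i) < delta) -> Rabs (f y - f x) < eps.

Fixpoint Ck (k : nat) (D : pt -> Prop) (f : pt -> R) : Prop :=
  match k with
  | O => cont_on D f
  | S k' => (forall i x, D x -> has_partial i f x) /\
            (cont_on D f) /\ (forall i, Ck k' D (partial i f))
  end.

Definition smooth (D : pt -> Prop) (f : pt -> R) : Prop := forall k, Ck k D f.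

Definition sum3 (F : idx -> R) : R := F i1 + F i2 + F i3.

Definition matfun := pt -> idx -> idx -> R.

Definition bracket (P : matfun) (f g : pt -> R) : pt -> R :=
  fun x => sum3 (fun i => sum3 (fun j => partial i f x * P x i j * partial j g x)).

Definition is_poisson (D : pt -> Prop) (P : matfun) : Prop :=
  (forall i j, smooth D (fun x => P x i j)) /\
  (forall x, D x -> forall i j, P x i j = - P x j i) /\
  (forall f g h, smooth D f -> smooth D g -> smooth D h ->
     forall x, D x ->
       bracket P f (bracket P g h) x + bracket P g (bracket P h f) x
       + bracket P h (bracket P f g) x = 0).

Definition compatible (D : pt -> Prop) (P1 P2 : matfun) : Prop :=
  forall a b : R, is_poisson D (fun x i j => a * P1 x i j + b * P2 x i j).

Definition Omega (x : pt) : Prop :=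
  pu x <> pv x /\ pv x <> pw x /\ pw x <> pu x.

Definition Ufield (x : pt) (i : idx) : R :=
  let u := pu x in let v := pv x in let w := pw x in
  match i with
  | i1 => 1 / (u - w)
  | i2 => 1 / (v - w)
  | i3 => 1 / (w - u) + 1 / (w - v)
  end.

Definition M1 (i j : idx) : R :=
  match i, j with
  | i1, i2 => 1 | i1, i3 => -1
  | i2, i1 => -1 | i2, i3 => 1
  | i3, i1 => 1 | i3, i2 => -1
  | _, _ => 0
  end.

Definition A2 (i j : idx) : R :=
  match i, j with
  | i1, i2 => 2 | i1, i3 => 1
  | i2, i1 => -2 | i2, i3 => -1
  | i3, i1 => -1 | i3, i2 => 1
  | _, _ => 0
  end.

Definition B2 (i j : idx) : R :=
  match i, j with
  | i1, i3 => -1 | i2, i3 => -1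
  | i3, i1 => 1 | i3, i2 => 1
  | _, _ => 0
  end.

Definition Pn1 : matfun := fun x i j =>
  let u := pu x in let v := pv x in let w := pw x in
  2 / (3 * (u - v) ^ 2 * (v - w) * (w - u)) * M1 i j.

Definition Pn2 : matfun := fun x i j =>
  let u := pu x in let v := pv x in let w := pw x in
  1 / 6 * ((u - v) / ((v - w) * (w - u))) * A2 i j
  + 1 / 2 * (1 / (w - u) - 1 / (v - w)) * B2 i j.

Definition Hn (x : pt) : R :=
  let u := pu x in let v := pv x in let w := pw x in
  1 / 4 * (u + v - 2 * w) * (u - v) ^ 3.

Definition H1 (x : pt) : R := pu x + pv x + pw x.

(* Main.v *)
Require Import Defs.
From Stdlib Require Import Reals Lra FunctionalExtensionality.
From Coquelicot Require Import Coquelicot.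
Open Scope R_scope.

Lemma idx_eqb_refl i : idx_eqb i i = true.
Proof. destruct i; reflexivity. Qed.

Lemma idx_eqb_neq i j : i <> j -> idx_eqb i j = false.
Proof. destruct i, j; simpl; congruence. Qed.

Lemma upd_eq x i t : upd x i t i = t.
Proof. unfold upd; now rewrite idx_eqb_refl. Qed.

Lemma upd_neq x i j t : i <> j -> upd x i t j = x j.
Proof. intros H; unfold upd; now rewrite idx_eqb_neq. Qed.

Lemma upd_same x i : upd x i (x i) = x.
Proof. apply functional_extensionality; intro j; unfold upd.
  destruct i, j; simpl; reflexivity. Qed.

Lemma upd_upd x i a b : upd (upd x i a) i b = upd x i b.
Proof. apply functional_extensionality; intro j; unfold upd.
  destruct i, j; simpl; reflexivity. Qed.

Lemma upd_comm x i j a b : i <> j -> upd (upd x i a) j b = upd (upd x j b) i a.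
Proof. intros H; apply functional_extensionality; intro k; unfold upd.
  destruct i, j, k; simpl; congruence. Qed.

Definition near (x y : pt) (d : R) := forall i, Rabs (y i - x i) < d.

Lemma Omega_open x : Omega x -> exists d, 0 < d /\ forall y, near x y d -> Omega y.
Proof.
  intros [H1 [H2 H3]]; unfold pu, pv, pw in *.
  exists (Rmin (Rabs (x i1 - x i2)) (Rmin (Rabs (x i2 - x i3)) (Rabs (x i3 - x i1))) / 2).
  assert (A1: 0 < Rabs (x i1 - x i2)) by (apply Rabs_pos_lt; lra).
  assert (A2: 0 < Rabs (x i2 - x i3)) by (apply Rabs_pos_lt; lra).
  assert (A3: 0 < Rabs (x i3 - x i1)) by (apply Rabs_pos_lt; lra).
  split.
  - assert (0 < Rmin (Rabs (x i1 - x i2)) (Rmin (Rabs (x i2 - x i3)) (Rabs (x i3 - x i1)))) by (repeat apply Rmin_glb_lt; assumption). lra.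
  - intros y Hy.
    pose proof (Hy i1) as B1; pose proof (Hy i2) as B2; pose proof (Hy i3) as B3.
    pose proof (Rmin_l (Rabs (x i1 - x i2)) (Rmin (Rabs (x i2 - x i3)) (Rabs (x i3 - x i1)))) as C1.
    pose proof (Rmin_r (Rabs (x i1 - x i2)) (Rmin (Rabs (x i2 - x i3)) (Rabs (x i3 - x i1)))) as C2.
    pose proof (Rmin_l (Rabs (x i2 - x i3)) (Rabs (x i3 - x i1))) as C3.
    pose proof (Rmin_r (Rabs (x i2 - x i3)) (Rabs (x i3 - x i1))) as C4.
    unfold Omega, pu, pv, pw.
    revert B1 B2 B3 C1 C2 C3 C4.
    set (m := Rmin _ _). intros.
    apply Rabs_def2 in B1; apply Rabs_def2 in B2; apply Rabs_def2 in B3.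
    split; [|split]; intro E.
    + assert (Rabs (x i1 - x i2) < m); [|lra].
      apply Rabs_def1; lra.
    + assert (Rabs (x i2 - x i3) < m); [|lra].
      apply Rabs_def1; lra.
    + assert (Rabs (x i3 - x i1) < m); [|lra].
      apply Rabs_def1; lra.
Qed.

Lemma near_upd x i t d : Rabs (t - x i) < d -> 0 < d -> near x (upd x i t) d.
Proof. intros H Hd j; unfold upd; destruct i, j; simpl;
  try (unfold Rminus; rewrite Rplus_opp_r, Rabs_R0); assumption. Qed.

Lemma Omega_loc x i : Omega x -> locally (x i) (fun t => Omega (upd x i t)).
Proof.
  intros Hx; destruct (Omega_open x Hx) as [d [Hd Hn]].
  exists (mkposreal d Hd); intros t Ht; apply Hn, near_upd; auto.
Qed.
Inductive ex := Cst (r : R) | Vr (i : idx) | Iuv | Ivw | Iwu | Add (a b : ex) | Mul (a b : ex).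

Fixpoint eval (e : ex) (x : pt) : R :=
  match e with
  | Cst r => r
  | Vr i => x i
  | Iuv => / (x i1 - x i2)
  | Ivw => / (x i2 - x i3)
  | Iwu => / (x i3 - x i1)
  | Add a b => eval a x + eval b x
  | Mul a b => eval a x * eval b x
  end.

Definition dv (j i : idx) : R := if idx_eqb j i then 1 else 0.

Fixpoint deriv (i : idx) (e : ex) : ex :=
  match e with
  | Cst r => Cst 0
  | Vr j => Cst (dv j i)
  | Iuv => Mul (Cst (dv i2 i - dv i1 i)) (Mul Iuv Iuv)
  | Ivw => Mul (Cst (dv i3 i - dv i2 i)) (Mul Ivw Ivw)
  | Iwu => Mul (Cst (dv i1 i - dv i3 i)) (Mul Iwu Iwu)
  | Add a b => Add (deriv i a) (deriv i b)
  | Mul a b => Add (Mul (deriv i a) b) (Mul a (deriv i b))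
  end.

Lemma eval_deriv_is e y i : Omega y ->
  is_derive (fun t => eval e (upd y i t)) (y i) (eval (deriv i e) y).
Proof.
  intros Hy; pose proof Hy as [H1 [H2 H3]]; unfold pu, pv, pw in *.
  induction e; simpl.
  - auto_derive; auto.
  - unfold upd; destruct i, i0; simpl; unfold dv; simpl; auto_derive; auto.
  - unfold upd; destruct i; simpl; unfold dv; simpl; auto_derive; try exact I; try (intro; apply H1; lra); field; intro; apply H1; lra.
  - unfold upd; destruct i; simpl; unfold dv; simpl; auto_derive; try exact I; try (intro; apply H2; lra); field; intro; apply H2; lra.
  - unfold upd; destruct i; simpl; unfold dv; simpl; auto_derive; try exact I; try (intro; apply H3; lra); field; intro; apply H3; lra.
  - pose proof (is_derive_plus _ _ _ _ _ IHe1 IHe2) as K; exact K.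
  - pose proof (is_derive_mult _ _ _ _ _ IHe1 IHe2 ltac:(intros; apply Rmult_comm)) as K.
    simpl in K; rewrite !upd_same in K. exact K.
Qed.
Definition PT := fct_UniformSpace idx R_UniformSpace.

Lemma cont_proj (y : pt) i : @continuous PT R_UniformSpace (fun z : pt => z i) y.
Proof.
  apply (proj2 (filterlim_locally (F := locally (T := PT) y) _ _)).
  intros eps; exists eps; intros z Hz; apply Hz.
Qed.

Lemma cont_inv_diff (y : pt) i j : y i <> y j ->
  @continuous PT R_UniformSpace (fun z : pt => / (z i - z j)) y.
Proof.
  intros H.
  apply (continuous_comp (U := PT) (fun z : pt => z i - z j) Rinv).
  - apply (continuous_minus (U:=PT) (V:=R_NormedModule) (fun z : pt => z i) (fun z : pt => z j)); apply cont_proj.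
  - apply continuous_Rinv; intro; apply H; lra.
Qed.

Lemma eval_cont e y : Omega y -> @continuous PT R_UniformSpace (eval e) y.
Proof.
  intros Hy; pose proof Hy as [H1 [H2 H3]]; unfold pu, pv, pw in *.
  induction e; simpl.
  - apply (continuous_const (U:=PT)).
  - apply cont_proj.
  - apply cont_inv_diff; auto.
  - apply cont_inv_diff; auto.
  - apply cont_inv_diff; auto.
  - apply (continuous_plus (U:=PT) (V:=R_NormedModule) (eval e1) (eval e2)); auto.
  - apply (continuous_mult (U:=PT) (K:=R_AbsRing) (eval e1) (eval e2)); auto.
Qed.

Lemma cont_conv (F : pt -> R) x : @continuous PT R_UniformSpace F x ->
  forall eps, 0 < eps -> exists delta, 0 < delta /\
    forall y, (forall i, Rabs (y i - x i) < delta) -> Rabs (F y - F x) < eps.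
Proof.
  intros H eps Heps.
  destruct (proj1 (filterlim_locally (F := locally (T := PT) x) _ _) H (mkposreal eps Heps)) as [d Hd].
  exists d; split; [apply cond_pos|].
  intros y Hy; apply (Hd y); intro i; apply Hy.
Qed.

Definition Good (F : pt -> R) := exists e, forall y, Omega y -> F y = eval e y.

Lemma loc_eq (F G : pt -> R) x i : Omega x -> (forall y, Omega y -> F y = G y) ->
  locally (x i) (fun t => F (upd x i t) = G (upd x i t)).
Proof.
  intros Hx H; generalize (Omega_loc x i Hx); apply filter_imp; intros t Ht; auto.
Qed.

Lemma partial_loc (F G : pt -> R) x i : Omega x -> (forall y, Omega y -> F y = G y) ->
  partial i F x = partial i G x.
Proof. intros Hx H; apply Derive_ext_loc, loc_eq; auto. Qed.

Lemma has_partial_loc (F G : pt -> R) x i : Omega x -> (forall y, Omega y -> F y = G y) ->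
  has_partial i G x -> has_partial i F x.
Proof. intros Hx H; apply ex_derive_ext_loc. apply loc_eq; auto. intros; symmetry; auto. Qed.

Lemma eval_partial e x i : Omega x -> partial i (eval e) x = eval (deriv i e) x.
Proof. intros Hx; apply is_derive_unique, eval_deriv_is; auto. Qed.

Lemma eval_has_partial e x i : Omega x -> has_partial i (eval e) x.
Proof. intros Hx; eexists; apply eval_deriv_is; auto. Qed.

Lemma Good_partial_eq F e x i : (forall y, Omega y -> F y = eval e y) -> Omega x ->
  partial i F x = eval (deriv i e) x.
Proof. intros H Hx; rewrite (partial_loc F (eval e)); auto; apply eval_partial; auto. Qed.

Lemma Good_cont F : Good F -> cont_on Omega F.
Proof.
  intros [e He] x Hx eps Heps.
  destruct (Omega_open x Hx) as [d0 [Hd0 Hn]].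
  destruct (cont_conv _ _ (eval_cont e x Hx) eps Heps) as [d [Hd Hc]].
  exists (Rmin d d0); split; [apply Rmin_glb_lt; auto|].
  intros y Hy.
  rewrite (He y), (He x); auto.
  - apply Hc; intro i; eapply Rlt_le_trans; [apply Hy| apply Rmin_l].
  - apply Hn; intro i; eapply Rlt_le_trans; [apply Hy| apply Rmin_r].
Qed.

Lemma Good_smooth F : Good F -> smooth Omega F.
Proof.
  intros HG k; revert F HG; induction k; intros F HG; simpl.
  - apply Good_cont; auto.
  - split; [|split].
    + intros i x Hx; destruct HG as [e He]; eapply has_partial_loc; eauto; apply eval_has_partial; auto.
    + apply Good_cont; auto.
    + intros i; apply IHk; destruct HG as [e He]; exists (deriv i e); intros y Hy;
      apply Good_partial_eq; auto.
Qed.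
Lemma sm_hp f : smooth Omega f -> forall i x, Omega x -> has_partial i f x.
Proof. intros H; exact (proj1 (H 1%nat)). Qed.

Lemma sm_part f i : smooth Omega f -> smooth Omega (partial i f).
Proof. intros H k; exact (proj2 (proj2 (H (S k))) i). Qed.

Lemma sm_cont f : smooth Omega f -> cont_on Omega f.
Proof. intros H; exact (H 0%nat). Qed.

Section Q.
Variables (x : pt) (i j : idx).
Hypothesis Hij : i <> j.
Definition q s t := upd (upd x i s) j t.
Lemma qi s t z : upd (q s t) i z = q z t.
Proof. unfold q; rewrite (upd_comm _ i j) by auto; rewrite upd_upd, upd_comm; auto. Qed.
Lemma qj s t z : upd (q s t) j z = q s z.
Proof. unfold q; rewrite upd_upd; auto. Qed.
Lemma q_i s t : q s t i = s.
Proof. unfold q; rewrite upd_neq by auto; apply upd_eq. Qed.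
Lemma q_j s t : q s t j = t.
Proof. unfold q; apply upd_eq. Qed.
Lemma q_x : q (x i) (x j) = x.
Proof. unfold q; rewrite !upd_same; auto. Qed.
Lemma pq_i G s t : partial i G (q s t) = Derive (fun z => G (q z t)) s.
Proof. unfold partial; rewrite q_i; apply Derive_ext; intro; rewrite qi; auto. Qed.
Lemma pq_j G s t : partial j G (q s t) = Derive (fun z => G (q s z)) t.
Proof. unfold partial; rewrite q_j; apply Derive_ext; intro; rewrite qj; auto. Qed.
Lemma hq_i G s t : has_partial i G (q s t) -> ex_derive (fun z => G (q z t)) s.
Proof. unfold has_partial; rewrite q_i; apply ex_derive_ext; intro; rewrite qi; auto. Qed.
Lemma hq_j G s t : has_partial j G (q s t) -> ex_derive (fun z => G (q s z)) t.
Proof. unfold has_partial; rewrite q_j; apply ex_derive_ext; intro; rewrite qj; auto. Qed.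
Lemma q_near s t d : Rabs (s - x i) < d -> Rabs (t - x j) < d -> near x (q s t) d.
Proof.
  intros Hs Ht k; unfold q, upd.
  destruct (idx_eqb j k) eqn:E1; [destruct j, k; try discriminate; auto|].
  destruct (idx_eqb i k) eqn:E2; [destruct i, k; try discriminate; auto|].
  unfold Rminus; rewrite Rplus_opp_r, Rabs_R0; eapply Rle_lt_trans; [apply Rabs_pos|apply Hs].
Qed.
End Q.

Lemma schwarz_sm f x i j : smooth Omega f -> Omega x ->
  partial j (partial i f) x = partial i (partial j f) x.
Proof.
  intros Hf Hx.
  destruct (idx_eqb i j) eqn:E; [destruct i, j; try discriminate; reflexivity|].
  assert (Hij : i <> j) by (intro; subst; rewrite idx_eqb_refl in E; discriminate).
  destruct (Omega_open x Hx) as [d0 [Hd0 Hn]].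
  assert (L : partial j (partial i f) x =
     Derive (fun t => Derive (fun z => f (q x i j z t)) (x i)) (x j)).
  { rewrite <- (q_x x i j) at 1 by auto. rewrite pq_j by auto. apply Derive_ext; intro t.
    rewrite pq_i by auto. reflexivity. }
  assert (R' : partial i (partial j f) x =
     Derive (fun z => Derive (fun t => f (q x i j z t)) (x j)) (x i)).
  { rewrite <- (q_x x i j) at 1 by auto. rewrite pq_i by auto. apply Derive_ext; intro t.
    rewrite pq_j by auto. reflexivity. }
  rewrite L, R'; symmetry.
  apply (Schwarz (fun s t => f (q x i j s t)) (x i) (x j)).
  - exists (mkposreal d0 Hd0); simpl; intros u v Hu Hv.
    assert (Hq : Omega (q x i j u v)) by (apply Hn, q_near; auto).
    split; [|split; [|split]].
    + apply hq_i; auto; apply sm_hp; auto.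
    + apply hq_j; auto; apply sm_hp; auto.
    + apply (ex_derive_ext (fun z => partial j f (q x i j z v))); [intro z; apply pq_j|].
      apply hq_i; auto; apply sm_hp; auto; apply sm_part; auto.
    + apply (ex_derive_ext (fun z => partial i f (q x i j u z))); [intro z; apply pq_i; auto|].
      apply hq_j; auto; apply sm_hp; auto; apply sm_part; auto.
  - intros eps.
    destruct (sm_cont _ (sm_part _ i (sm_part _ j Hf)) x Hx eps (cond_pos eps)) as [d [Hd Hc]].
    exists (mkposreal (Rmin d d0) (Rmin_glb_lt _ _ _ Hd Hd0)); simpl; intros u v Hu Hv.
    assert (E2 : forall u v, Derive (fun z => Derive (fun t => f (q x i j z t)) v) u
                 = partial i (partial j f) (q x i j u v)).
    { intros u' v'; rewrite pq_i by auto; apply Derive_ext; intro z; rewrite pq_j by auto; reflexivity. }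
    rewrite !E2, q_x by auto.
    apply Hc, q_near; try assumption; (eapply Rlt_le_trans; [eassumption|apply Rmin_l]).
  - intros eps.
    destruct (sm_cont _ (sm_part _ j (sm_part _ i Hf)) x Hx eps (cond_pos eps)) as [d [Hd Hc]].
    exists (mkposreal (Rmin d d0) (Rmin_glb_lt _ _ _ Hd Hd0)); simpl; intros u v Hu Hv.
    assert (E2 : forall u v, Derive (fun z => Derive (fun t => f (q x i j t z)) u) v
                 = partial j (partial i f) (q x i j u v)).
    { intros u' v'; rewrite pq_j by auto; apply Derive_ext; intro z; rewrite pq_i by auto; reflexivity. }
    rewrite !E2, q_x by auto.
    apply Hc, q_near; try assumption; (eapply Rlt_le_trans; [eassumption|apply Rmin_l]).
Qed.
Lemma sum3_ext F G : (forall i, F i = G i) -> sum3 F = sum3 G.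
Proof. intros H; unfold sum3; rewrite !H; auto. Qed.

Lemma is_derive_sum3 (F : idx -> R -> R) dF t0 :
  (forall k, is_derive (F k) t0 (dF k)) -> is_derive (fun t => sum3 (fun k => F k t)) t0 (sum3 dF).
Proof.
  intros H; unfold sum3.
  pose proof (is_derive_plus _ _ _ _ _ (is_derive_plus _ _ _ _ _ (H i1) (H i2)) (H i3)) as K.
  exact K.
Qed.

Lemma is_derive_prod3 (A B C : R -> R) a b c t0 :
  is_derive A t0 a -> is_derive B t0 b -> is_derive C t0 c ->
  is_derive (fun t => A t * B t * C t) t0 (a * B t0 * C t0 + A t0 * b * C t0 + A t0 * B t0 * c).
Proof.
  intros HA HB HC.
  pose proof (is_derive_mult _ _ _ _ _ (is_derive_mult _ _ _ _ _ HA HB ltac:(intros; apply Rmult_comm)) HC ltac:(intros; apply Rmult_comm)) as K.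
  eapply is_derive_ext; [intro; reflexivity|].
  replace (a * B t0 * C t0 + A t0 * b * C t0 + A t0 * B t0 * c) with
    (plus (mult (plus (mult a (B t0)) (mult (A t0) b)) (C t0)) (mult (mult (A t0) (B t0)) c)).
  exact K.
  simpl; unfold plus, mult; simpl; ring.
Qed.

Lemma partial_is G x j : has_partial j G x -> is_derive (fun t => G (upd x j t)) (x j) (partial j G x).
Proof. intros H; apply Derive_correct; exact H. Qed.

Lemma d_bracket (P : matfun) g h x j :
  (forall k, has_partial j (partial k g) x) -> (forall k, has_partial j (partial k h) x) ->
  (forall k l, has_partial j (fun y => P y k l) x) ->
  partial j (bracket P g h) x = sum3 (fun k => sum3 (fun l =>
     partial j (partial k g) x * P x k l * partial l h x
   + partial k g x * partial j (fun y => P y k l) x * partial l h x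
   + partial k g x * P x k l * partial j (partial l h) x)).
Proof.
  intros Hg Hh HP.
  apply is_derive_unique; unfold bracket.
  apply (is_derive_sum3 (fun k t => sum3 (fun l => partial k g (upd x j t) * P (upd x j t) k l * partial l h (upd x j t)))); intro k.
  apply (is_derive_sum3 (fun l t => partial k g (upd x j t) * P (upd x j t) k l * partial l h (upd x j t))); intro l.
  pose proof (is_derive_prod3 _ _ _ _ _ _ _ (partial_is _ _ _ (Hg k)) (partial_is _ _ _ (HP k l)) (partial_is _ _ _ (Hh l))) as K.
  cbv beta in K; rewrite !upd_same in K; exact K.
Qed.
Definition Phi (P : matfun) x := sum3 (fun j =>
   P x i1 j * partial j (fun y => P y i2 i3) x
 + P x i2 j * partial j (fun y => P y i3 i1) x
 + P x i3 j * partial j (fun y => P y i1 i2) x).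

Definition det3 (f g h : pt -> R) x :=
  let f1 := partial i1 f x in let f2 := partial i2 f x in let f3 := partial i3 f x in
  let g1 := partial i1 g x in let g2 := partial i2 g x in let g3 := partial i3 g x in
  let h1 := partial i1 h x in let h2 := partial i2 h x in let h3 := partial i3 h x in
  f1 * (g2 * h3 - g3 * h2) - f2 * (g1 * h3 - g3 * h1) + f3 * (g1 * h2 - g2 * h1).

Lemma partial_opp (F : pt -> R) j x : partial j (fun y => - F y) x = - partial j F x.
Proof. unfold partial; apply Derive_opp. Qed.

Lemma bb (P : matfun) f g h x : bracket P f (bracket P g h) x =
  sum3 (fun i => sum3 (fun j => partial i f x * P x i j * partial j (bracket P g h) x)).
Proof. reflexivity. Qed.

Definition hess_ok (g : pt -> R) x :=
  (forall k j, has_partial j (partial k g) x) /\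
  partial i2 (partial i1 g) x = partial i1 (partial i2 g) x /\
  partial i3 (partial i1 g) x = partial i1 (partial i3 g) x /\
  partial i3 (partial i2 g) x = partial i2 (partial i3 g) x.

Lemma bb_exp (P : matfun) f g h x : hess_ok g x -> hess_ok h x ->
  (forall k l j, has_partial j (fun y => P y k l) x) ->
  bracket P f (bracket P g h) x =
  sum3 (fun i => sum3 (fun j => partial i f x * P x i j * sum3 (fun k => sum3 (fun l =>
     partial j (partial k g) x * P x k l * partial l h x
   + partial k g x * partial j (fun y => P y k l) x * partial l h x
   + partial k g x * P x k l * partial j (partial l h) x)))).
Proof.
  intros [Hg _] [Hh _] HP; rewrite bb.
  apply sum3_ext; intro i; apply sum3_ext; intro j.
  rewrite d_bracket; auto.
Qed.

Lemma jac_gen (P : matfun) f g h x :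
  (forall y k l, P y l k = - P y k l) ->
  (forall k l j, has_partial j (fun y => P y k l) x) ->
  hess_ok f x -> hess_ok g x -> hess_ok h x ->
  bracket P f (bracket P g h) x + bracket P g (bracket P h f) x
  + bracket P h (bracket P f g) x = Phi P x * det3 f g h x.
Proof.
  intros Hs HP Hf Hg Hh.
  rewrite (bb_exp P f g h), (bb_exp P g h f), (bb_exp P h f g); auto.
  assert (D : forall k l j, partial j (fun y => P y l k) x = - partial j (fun y => P y k l) x).
  { intros k l j; rewrite <- partial_opp; f_equal; apply functional_extensionality; intro y; apply Hs. }
  assert (D0 : forall k j, partial j (fun y => P y k k) x = 0).
  { intros k j; pose proof (D k k j); lra. }
  assert (P0 : forall k, P x k k = 0).
  { intros k; pose proof (Hs x k k); lra. }
  destruct Hf as [_ [F1 [F2 F3]]]; destruct Hg as [_ [G1 [G2 G3]]]; destruct Hh as [_ [H1 [H2 H3]]].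
  unfold Phi, det3, sum3.
  rewrite F1, F2, F3, G1, G2, G3, H1, H2, H3.
  rewrite !(D i1 i2), !(D i1 i3), !(D i2 i3), !D0, !P0, !(Hs x i1 i2), !(Hs x i1 i3), !(Hs x i2 i3).
  ring.
Qed.
Definition Pab (a b : R) : matfun := fun x i j => a * Pn1 x i j + b * Pn2 x i j.

Definition e_entry (a b : R) (k l : idx) : ex :=
  Add (Mul (Cst a) (Mul (Cst (2/3 * M1 k l)) (Mul Iuv (Mul Iuv (Mul Ivw Iwu)))))
      (Mul (Cst b) (Add (Mul (Cst (1/6 * A2 k l)) (Mul (Add (Vr i1) (Mul (Cst (-1)) (Vr i2))) (Mul Ivw Iwu)))
                        (Mul (Cst (1/2 * B2 k l)) (Add Iwu (Mul (Cst (-1)) Ivw))))).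

Lemma e_entry_ok a b k l y : Omega y -> Pab a b y k l = eval (e_entry a b k l) y.
Proof.
  intros [H1 [H2 H3]]; unfold pu, pv, pw in *.
  unfold Pab, Pn1, Pn2, pu, pv, pw; simpl.
  field; repeat split; intro; lra.
Qed.

Lemma Pab_good a b k l : Good (fun y => Pab a b y k l).
Proof. exists (e_entry a b k l); intros; apply e_entry_ok; auto. Qed.

Lemma Pab_skew a b y k l : Pab a b y l k = - Pab a b y k l.
Proof. unfold Pab, Pn1, Pn2; destruct k, l; simpl; ring. Qed.

Lemma Pab_dpartial a b k l j x : Omega x ->
  partial j (fun y => Pab a b y k l) x = eval (deriv j (e_entry a b k l)) x.
Proof. intros Hx; apply Good_partial_eq; auto; intros; apply e_entry_ok; auto. Qed.

Lemma Phi_zero a b x : Omega x -> Phi (Pab a b) x = 0.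
Proof.
  intros Hx; unfold Phi, sum3; rewrite !Pab_dpartial by auto.
  destruct Hx as [H1 [H2 H3]]; unfold pu, pv, pw in *.
  unfold Pab, Pn1, Pn2, pu, pv, pw; simpl; unfold dv; simpl.
  field; repeat split; intro; lra.
Qed.
Lemma hess_sm f x : smooth Omega f -> Omega x -> hess_ok f x.
Proof.
  intros Hf Hx; split; [intros k j; apply sm_hp; auto; apply sm_part; auto|].
  split; [|split]; apply schwarz_sm; auto.
Qed.

Lemma Pab_poisson a b : is_poisson Omega (Pab a b).
Proof.
  split; [|split].
  - intros i j; apply Good_smooth, Pab_good.
  - intros x _ i j; rewrite Pab_skew; ring.
  - intros f g h Hf Hg Hh x Hx.
    rewrite jac_gen.
    + rewrite Phi_zero; auto; ring.
    + apply Pab_skew.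
    + intros k l j; apply sm_hp; auto; apply Good_smooth, Pab_good.
    + apply hess_sm; auto.
    + apply hess_sm; auto.
    + apply hess_sm; auto.
Qed.

Lemma poisson_ext (P Q : matfun) : (forall x i j, P x i j = Q x i j) -> is_poisson Omega P -> is_poisson Omega Q.
Proof.
  intros H; replace Q with P; auto.
  apply functional_extensionality; intro x; apply functional_extensionality; intro i;
  apply functional_extensionality; intro j; auto.
Qed.

Lemma Hn_partial x j : Omega x -> partial j Hn x =
  match j with
  | i1 => 1/4 * (pu x - pv x)^3 + 3/4 * (pu x + pv x - 2 * pw x) * (pu x - pv x)^2
  | i2 => 1/4 * (pu x - pv x)^3 - 3/4 * (pu x + pv x - 2 * pw x) * (pu x - pv x)^2
  | i3 => - 1/2 * (pu x - pv x)^3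
  end.
Proof.
  intros _; unfold partial, Hn, pu, pv, pw; apply is_derive_unique;
  destruct j; unfold upd; simpl; auto_derive; try exact I; field.
Qed.

Lemma H1_partial x j : partial j H1 x = 1.
Proof.
  unfold partial, H1, pu, pv, pw; apply is_derive_unique;
  destruct j; unfold upd; simpl; auto_derive; try exact I; field.
Qed.

Theorem mainTheorem7 :
  is_poisson Omega Pn1 /\ is_poisson Omega Pn2 /\ compatible Omega Pn1 Pn2 /\
  (forall x, Omega x -> forall i,
     Ufield x i = sum3 (fun j => Pn1 x i j * partial j Hn x) /\
     Ufield x i = sum3 (fun j => Pn2 x i j * partial j H1 x)).
Proof.
  split; [|split; [|split]].
  - apply (poisson_ext (Pab 1 0)); [intros; unfold Pab; ring|apply Pab_poisson].
  - apply (poisson_ext (Pab 0 1)); [intros; unfold Pab; ring|apply Pab_poisson].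
  - intros a b; apply Pab_poisson.
  - intros x Hx i; unfold sum3; rewrite !Hn_partial, !H1_partial by auto.
    destruct Hx as [H1 [H2 H3]]; unfold pu, pv, pw in *.
    unfold Ufield, Pn1, Pn2, pu, pv, pw; destruct i; simpl;
    split; field; repeat split; intro; lra.
Qed.
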